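(* For every positive integer $n$, the order supergraph $\mathcal{S}(S_n)$ of the symmetric group $S_n$ is cyclically separable if and only if $n \geq 4$.
   Context: All graphs are simple and undirected. For a finite group $G$, the order supergraph $\mathcal{S}(G)$ is the graph with vertex set $G$ in which two distinct vertices $x,y$ are adjacent if and only if the order of $x$ divides the order of $y$ or the order of $y$ divides the order of $x$. For a graph $\Gamma$, a vertex cutset is a set $S$ of vertices such that $\Gamma - S$ is disconnected; a cyclic vertex cutset is a vertex cutset $S$ such that $\Gamma - S$ has at least two connected components each of which contains a cycle. $\Gamma$ is called cyclically separable if it has a cyclic vertex cutset. *)

(* Defs.v *)
From mathcomp Require Import all_boot all_fingroup.
Set Implicit Arguments. Unset Strict Implicit. Unset Printing Implicit Defensive.

(* A simple undirected graph on a finite type T is given by a symmetric,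
   irreflexive relation e : rel T. *)

Definition order_supergraph (gT : finGroupType) : rel gT :=
  fun x y => (x != y) && ((#[x]%g %| #[y]%g) || (#[y]%g %| #[x]%g)).

Definition delete_vertices (T : finType) (e : rel T) (S : {set T}) : rel T :=
  fun x y => [&& x \notin S, y \notin S & e x y].

Definition component (T : finType) (r : rel T) (x : T) : {set T} :=
  [set y | connect r x y].

Definition contains_cycle (T : finType) (r : rel T) (C : {set T}) : Prop :=
  exists c : seq T, [/\ 3 <= size c, path.cycle r c, uniq c & {subset c <= C}].

Definition vertex_cutset (T : finType) (e : rel T) (S : {set T}) : Prop :=
  exists x y, [/\ x \notin S, y \notin S & ~~ connect (delete_vertices e S) x y].

Definition cyclic_vertex_cutset (T : finType) (e : rel T) (S : {set T}) : Prop :=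
  vertex_cutset e S /\
  exists x y, [/\ x \notin S, y \notin S,
    ~~ connect (delete_vertices e S) x y,
    contains_cycle (delete_vertices e S) (component (delete_vertices e S) x) &
    contains_cycle (delete_vertices e S) (component (delete_vertices e S) y)].

Definition cyclically_separable (T : finType) (e : rel T) : Prop :=
  exists S : {set T}, cyclic_vertex_cutset e S.

(* Main.v *)
Require Import Defs.
From mathcomp Require Import all_boot all_fingroup all_solvable.
From mathcomp Require Import zify.
Set Implicit Arguments. Unset Strict Implicit. Unset Printing Implicit Defensive.

Section GS.
Local Open Scope group_scope.
Lemma order_two (gT : finGroupType) (x : gT) : x ^+ 2 = 1 -> x != 1 -> #[x] = 2.
Proof.
move=> x2 x1; have : (#[x] %| 2)%N by rewrite order_dvdn x2.
rewrite dvdn_divisors // inE /=.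
case/orP=> [/eqP o1|/orP [/eqP //|//]].
by move: x1; rewrite -order_eq1 o1.
Qed.

Lemma order_three (gT : finGroupType) (x : gT) : x ^+ 3 = 1 -> x != 1 -> #[x] = 3.
Proof.
move=> x2 x1; have : (#[x] %| 3)%N by rewrite order_dvdn x2.
rewrite dvdn_divisors // inE /=.
case/orP=> [/eqP o1|/orP [/eqP //|//]].
by move: x1; rewrite -order_eq1 o1.
Qed.

Lemma order_tperm (T : finType) (a b : T) : a != b -> #[tperm a b] = 2.
Proof.
move=> ab; apply: order_two; first by rewrite expgS expg1 tperm2.
apply/eqP=> /permP/(_ a); rewrite tpermL perm1 => ba.
by move: ab; rewrite ba eqxx.
Qed.

Definition cyc (T : finType) (a b c : T) : {perm T} := tperm a b * tperm a c.

Lemma cycA (T : finType) (a b c : T) : a != b -> a != c -> b != c -> cyc a b c a = b.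
Proof. by move=> ab ac bc; rewrite permM tpermL tpermD // eq_sym. Qed.
Lemma cycB (T : finType) (a b c : T) : a != b -> a != c -> b != c -> cyc a b c b = c.
Proof. by move=> ab ac bc; rewrite permM tpermR tpermL. Qed.

Lemma order_cyc (T : finType) (a b c : T) : a != b -> a != c -> b != c -> #[cyc a b c] = 3.
Proof.
move=> ab ac bc; apply: order_three; last first.
  apply/eqP=> /permP/(_ a); rewrite cycA // perm1 => ba.
  by move: ab; rewrite ba eqxx.
have cb : c != b by rewrite eq_sym.
apply/permP=> i; rewrite perm1 !expgS expg0 mulg1 !permM.
case: (tpermP a b i) => [->|->|ia ib].
- by rewrite (tpermD ab cb) tpermR tpermL (tpermD ac bc) tpermR.
- by rewrite tpermL (tpermD ac bc) tpermR tpermL (tpermD ab cb).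
- case: (tpermP a c i) => [/ia//|->|_ ic].
  + by rewrite tpermL (tpermD ab cb) tpermR tpermL.
  + have ai : a != i by apply/eqP=> /esym.
    have bi : b != i by apply/eqP=> /esym.
    have ci : c != i by apply/eqP=> /esym.
    by rewrite !tpermD.
Qed.
End GS.

Lemma connect_pres (T : finType) (r : rel T) (P : pred T) :
  (forall u v, r u v -> P u -> P v) -> forall u v, connect r u v -> P u -> P v.
Proof.
move=> H u v /connectP [p]; elim: p u => [|w p IH] u /=; first by move=> _ ->.
by case/andP=> ruw pw vl Pu; apply: (IH w pw vl); apply: H ruw Pu.
Qed.

Lemma neq_at (T : finType) (s t : {perm T}) z : s z != t z -> s != t.
Proof. by apply: contra => /eqP ->. Qed.

Lemma backward_gen (T : finType) (a b c d : T) :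
  a != b -> a != c -> a != d -> b != c -> b != d -> c != d ->
  cyclically_separable (@order_supergraph {perm T}).
Proof.
move=> ab ac ad bc bd cd.
pose S := [set z : {perm T} | (#[z]%g != 2) && (#[z]%g != 3)].
pose r := delete_vertices (@order_supergraph {perm T}) S.
have edge : forall u v : {perm T}, #[u]%g = #[v]%g -> (#[u]%g == 2) || (#[u]%g == 3) ->
    u != v -> r u v.
  move=> u v uv hu nuv; rewrite /r /delete_vertices /order_supergraph !inE -uv.
  by rewrite nuv dvdnn; case/orP: hu => /eqP ->.
have o1 := order_tperm ab; have o2 := order_tperm ac; have o3 := order_tperm ad.
have q1 := order_cyc ab ac bc; have q2 := order_cyc ab ad bd.
have q3 := order_cyc ac ad cd.
have n12 : tperm a b != tperm a c by apply: (@neq_at _ _ _ a); rewrite !tpermL.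
have n13 : tperm a b != tperm a d by apply: (@neq_at _ _ _ a); rewrite !tpermL.
have n23 : tperm a c != tperm a d by apply: (@neq_at _ _ _ a); rewrite !tpermL.
have m12 : cyc a b c != cyc a b d by apply: (@neq_at _ _ _ b); rewrite !cycB.
have m13 : cyc a b c != cyc a c d by apply: (@neq_at _ _ _ a); rewrite !cycA.
have m23 : cyc a b d != cyc a c d by apply: (@neq_at _ _ _ a); rewrite !cycA.
have two_only : forall u v, connect r u v -> #[u]%g == 2 -> #[v]%g == 2.
  apply: (connect_pres (P := fun z => #[z]%g == 2)) => u v /and3P [_].
  rewrite /S inE negb_and !negbK /order_supergraph => /orP [] /eqP -> /andP [_].
    by [].
  by move=> h /eqP hu; move: h; rewrite hu.
have nxy : ~~ connect r (tperm a b) (cyc a b c).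
  by apply/negP => /two_only; rewrite o1 q1 => /(_ isT).
have xS : tperm a b \notin S by rewrite inE o1.
have yS : cyc a b c \notin S by rewrite inE q1.
exists S; split; first by exists (tperm a b), (cyc a b c).
exists (tperm a b), (cyc a b c); split => //.
- exists [:: tperm a b; tperm a c; tperm a d]; split => //=.
  + by apply/and4P; split => //; apply: edge; rewrite ?o1 ?o2 ?o3 // eq_sym.
  + by rewrite !in_cons !in_nil !orbF negb_or n12 n13 n23.
  + move=> z; rewrite !in_cons in_nil orbF /component inE => /or3P [] /eqP ->.
    * exact: connect0.
    * by apply: connect1; apply: edge; rewrite ?o1 ?o2.
    * by apply: connect1; apply: edge; rewrite ?o1 ?o3.
- exists [:: cyc a b c; cyc a b d; cyc a c d]; split => //=.
  + by apply/and4P; split => //; apply: edge; rewrite ?q1 ?q2 ?q3 // eq_sym.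
  + by rewrite !in_cons !in_nil !orbF negb_or m12 m13 m23.
  + move=> z; rewrite !in_cons in_nil orbF /component inE => /or3P [] /eqP ->.
    * exact: connect0.
    * by apply: connect1; apply: edge; rewrite ?q1 ?q2.
    * by apply: connect1; apply: edge; rewrite ?q1 ?q3.
Qed.
Lemma sym_del (gT : finGroupType) (S : {set gT}) :
  symmetric (delete_vertices (@order_supergraph gT) S).
Proof.
move=> x y; rewrite /delete_vertices /order_supergraph.
by rewrite eq_sym (orbC (_ %| _)); case: (x \in S); case: (y \in S).
Qed.

Lemma del_notin (gT : finGroupType) (S : {set gT}) x y :
  connect (delete_vertices (@order_supergraph gT) S) x y -> x \notin S -> y \notin S.
Proof.
move=> cxy; apply: (connect_pres (P := [pred z | z \notin S])) cxy.
by move=> u v /and3P [].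
Qed.

Lemma cycle_notin (gT : finGroupType) (S : {set gT}) x (c : seq gT) :
  x \notin S -> {subset c <= component (delete_vertices (@order_supergraph gT) S) x} ->
  forall z, z \in c -> z \notin S.
Proof.
move=> xS sub z /sub; rewrite inE => cz; exact: del_notin cz xS.
Qed.

Lemma forward (n : nat) :
  cyclically_separable (@order_supergraph {perm 'I_n}) -> 4 <= n.
Proof.
case=> S [_ [x [y [xS yS nxy [c1 [s1 _ u1 sub1]] [c2 [s2 _ u2 sub2]]]]]].
set r := delete_vertices _ S in nxy sub1 sub2.
have symr : connect_sym r by apply: sym_connect_sym; apply: sym_del.
case: (boolP ((1%g : {perm 'I_n}) \in S)) => oneS; last first.
  have c1y : forall z, z \notin S -> connect r 1%g z.
    move=> z zS; have [->|nz] := eqVneq z 1%g; first exact: connect0.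
    apply: connect1; rewrite /r /delete_vertices oneS zS /order_supergraph eq_sym nz.
    by rewrite order1 dvd1n.
  by move: nxy; rewrite (connect_trans _ (c1y _ yS)) // symr c1y.
have u : uniq (c1 ++ c2).
  rewrite cat_uniq u1 u2 andbT /=; apply/hasPn => z zc2; apply/negP => zc1.
  move: (sub1 z zc1) (sub2 z zc2); rewrite !inE => xz yz.
  by move: nxy; rewrite (connect_trans xz) // symr.
have sub : {subset c1 ++ c2 <= enum (predC1 (1%g : {perm 'I_n}))}.
  move=> z; rewrite mem_cat mem_enum /= => /orP [] zc.
    by apply/eqP => z1; move: (cycle_notin xS sub1 zc); rewrite z1 oneS.
  by apply/eqP => z1; move: (cycle_notin yS sub2 zc); rewrite z1 oneS.
have := uniq_leq_size u sub; rewrite -cardE cardC1 card_Sn size_cat => h.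
case: (leqP 4 n) => // n3.
have f6 : n`! <= 6.
  by move: n3; clear; case: n => [|[|[|[|]]]].
have : 6 <= n`!.-1 by apply: leq_trans h; apply: (leq_add s1 s2).
by case: (n`!) f6 => [|[|[|[|[|[|[|]]]]]]].
Qed.

Theorem mainTheorem6 (n : nat) (hn : 0 < n) :
  cyclically_separable (@order_supergraph {perm 'I_n}) <-> 4 <= n.
Proof.
split; first exact: forward.
move=> n4.
have h0 : 0 < n by apply: leq_trans n4.
have h1 : 1 < n by apply: leq_trans n4.
have h2 : 2 < n by apply: leq_trans n4.
have h3 : 3 < n by [].
by apply: (@backward_gen _ (Ordinal h0) (Ordinal h1) (Ordinal h2) (Ordinal h3)).
Qed.
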